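(* Let $p\ge 2$ and let $J$ be a periodic Jacobi operator on $\ell^2(\mathbb{Z})$ with period $p$, given by $(J\psi)_n=a_{n-1}\psi_{n-1}+b_n\psi_n+a_n\psi_{n+1}$, where $a_n>0$, $b_n\in\mathbb{R}$, $a_{n+p}=a_n$, $b_{n+p}=b_n$ for all $n$. Let $A:=(a_1\cdots a_p)^{1/p}$, $s:=\lambda_p^{\max}-\lambda_1^{\min}$, and let $\sigma_1,\dots,\sigma_p$ be the spectral bands of $J$. Then $$\frac{4A^p}{s^{p-1}}\le\max_{1\le n\le p}|\sigma_n|.$$
   Context: Spectral structure: the spectrum of $J$ is $\sigma(J)=\{\lambda\in\mathbb{R}: |\Delta(\lambda)|\le 2\}$, where $\Delta(\lambda)=\operatorname{tr}\big(A_p(\lambda)A_{p-1}(\lambda)\cdots A_1(\lambda)\big)$ with $A_n(\lambda)=\begin{pmatrix}(\lambda-b_n)/a_n & -a_{n-1}/a_n\\ 1&0\end{pmatrix}$ (the discriminant, a real polynomial of degree $p$). It is a standard fact that this set is a union of $p$ closed intervals (bands) $\sigma_n=[\lambda_n^{\min},\lambda_n^{\max}]$, $1\le n\le p$, with $\lambda_n^{\min}<\lambda_n^{\max}\le\lambda_{n+1}^{\min}$ (bands may touch but do not overlap); on each band $\Delta$ is monotone and maps it onto $[-2,2]$. The spectral gaps are $\gamma_n=(\lambda_n^{\max},\lambda_{n+1}^{\min})$, $1\le n\le p-1$ (possibly empty). $|\cdot|$ denotes Lebesgue measure (length). *)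

(* Defs.v *)
From mathcomp Require Import all_boot all_order all_algebra.
From mathcomp Require Import all_classical all_reals exp.
Set Implicit Arguments. Unset Strict Implicit. Unset Printing Implicit Defensive.
Import Order.TTheory GRing.Theory Num.Theory.
Local Open Scope ring_scope.

Definition transfer (R : realType) (a b : int -> R) (n : int) (l : R) : 'M[R]_2 :=
  \matrix_(i < 2, j < 2)
    (if (val i == 0%N) && (val j == 0%N) then (l - b n) / a n
     else if (val i == 0%N) then - (a (n - 1)) / a n
     else if (val j == 0%N) then 1 else 0).

Definition discriminant (R : realType) (p : nat) (a b : int -> R) (l : R) : R :=
  \tr (\big[mulmx/1%:M]_(i < p) transfer a b (p - i)%:Z l).

Definition spectrum (R : realType) (p : nat) (a b : int -> R) : set R :=
  [set l | `|discriminant p a b l| <= 2].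

Definition geomA (R : realType) (p : nat) (a : int -> R) : R :=
  powR (\prod_(i < p) a (i.+1)%:Z) (p%:R^-1).

(* lo, hi (indexed 0..p-1) are the edges of the p spectral bands of J:
   sigma(J) is their union, they are ordered and non-overlapping, and on each
   band Delta is monotone and maps the band onto [-2,2]. *)
Definition band_edges (R : realType) (p : nat) (a b : int -> R)
    (lo hi : nat -> R) : Prop :=
  [/\ (forall l, spectrum p a b l <->
         exists2 n, (n < p)%N & lo n <= l <= hi n),
      (forall n, (n < p)%N -> lo n < hi n),
      (forall n, (n.+1 < p)%N -> hi n <= lo n.+1),
      (forall n, (n < p)%N ->
         (forall x y, lo n <= x -> x <= y -> y <= hi n ->
            discriminant p a b x <= discriminant p a b y) \/
         (forall x y, lo n <= x -> x <= y -> y <= hi n ->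
            discriminant p a b y <= discriminant p a b x)) &
      (forall n, (n < p)%N -> forall y, -2 <= y <= 2 ->
         exists2 x, lo n <= x <= hi n & discriminant p a b x = y)].

(* Main.v *)
Require Import Defs.
From mathcomp Require Import all_boot all_order all_algebra.
From mathcomp Require Import all_classical all_reals exp.
From mathcomp Require Import zify ring lra.
Import Order.TTheory GRing.Theory Num.Theory.
Local Open Scope ring_scope.

Lemma bigmx_recr (R:comNzRingType) k (F : nat -> 'M[R]_2) : \big[mulmx/1%:M]_(i < k.+1) F i = \big[mulmx/1%:M]_(i < k) F i *m F k.
Proof.
have E : forall n, \big[mulmx/1%:M]_(i < n) F i = \prod_(i < n) (F i : 'M[R]_(1.+1)) by [].
by rewrite !E big_ord_recr.
Qed.

Section PolyPart.
Variable R : realType.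
Variables (a b : int -> R).
Hypothesis apos : forall n, 0 < a n.

Definition PT (n : int) : 'M[{poly R}]_2 :=
  \matrix_(i < 2, j < 2)
    (if (val i == 0%N) && (val j == 0%N) then (a n)^-1 *: ('X - (b n)%:P)
     else if (val i == 0%N) then (- (a (n - 1)) / a n)%:P
     else if (val j == 0%N) then 1 else 0).

Lemma PT_eval n l : map_mx (horner_eval l) (PT n) = transfer a b n l.
Proof.
apply/matrixP => i j; rewrite !mxE /horner_eval /=.
case: ifP => _.
  rewrite hornerZ hornerXsubC mulrC. done.
case: ifP => _; first by rewrite hornerC.
by case: ifP => _; rewrite ?hornerC.
Qed.

Lemma mul2E (A B : 'M[{poly R}]_2) i j :
  (A *m B) i j = A i ord0 * B ord0 j + A i ord_max * B ord_max j.
Proof.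
rewrite mxE !big_ord_recl big_ord0 addr0.
by have -> : lift ord0 ord0 = ord_max :> 'I_2 by apply: val_inj.
Qed.

Definition PP (f : nat -> int) k := \big[mulmx/1%:M]_(i < k) PT (f i).

Lemma PP_eval f k l : map_mx (horner_eval l) (PP f k) =
  \big[mulmx/1%:M]_(i < k) transfer a b (f i) l.
Proof.
elim: k => [|k IH]; first by rewrite /PP !big_ord0 map_mx1.
by rewrite /PP (bigmx_recr _ _ (fun i => PT (f i))) (bigmx_recr _ _ (fun i => transfer a b (f i) l)) map_mxM -IH PT_eval.
Qed.

Lemma PP_size f k :
  [/\ size (PP f k ord0 ord0) = k.+1,
      lead_coef (PP f k ord0 ord0) = \prod_(i < k) (a (f i))^-1,
      (size (PP f k ord0 ord_max) <= k)%N, (size (PP f k ord_max ord0) <= k)%N &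
      (size (PP f k ord_max ord_max) <= maxn 1 k)%N].
Proof.
elim: k => [|k [s00 l00 s01 s10 s11]].
  have -> : PP f 0 = 1%:M.
    by rewrite /PP; change (\prod_(i < 0) (PT (f i) : 'M[{poly R}]_(1.+1)) = 1); rewrite big_ord0.
  rewrite !mxE /= big_ord0 size_poly1 lead_coef1 size_poly0.
  by [].
have hu : size ((a (f k))^-1 *: ('X - (b (f k))%:P)) = 2%N.
  by rewrite size_scale ?size_XsubC // invr_eq0 gt_eqF.
have lu : lead_coef ((a (f k))^-1 *: ('X - (b (f k))%:P)) = (a (f k))^-1.
  by rewrite lead_coefZ lead_coefXsubC mulr1.
rewrite /PP (bigmx_recr _ _ (fun i => PT (f i))) -/(PP f k) !mul2E !mxE /=.
set u := _ *: _.
rewrite !mulr1 !mulr0 !addr0.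
have nz00 : PP f k ord0 ord0 != 0 by rewrite -size_poly_gt0 s00.
have nzu : u != 0 by rewrite -size_poly_gt0 hu.
have sm : size (PP f k ord0 ord0 * u) = k.+2 by rewrite size_mul // s00 hu addn2.
split.
- by rewrite size_addl sm // ltnS (leq_trans s01).
- rewrite lead_coefDl ?sm ?ltnS ?(leq_trans s01) // lead_coefM l00 lu.
  by rewrite big_ord_recr.
- rewrite mulrC mul_polyC; apply: (leq_trans (size_scale_leq _ _)).
  by rewrite s00.
- apply: (leq_trans (size_add _ _)); rewrite geq_max; apply/andP; split.
    apply: (leq_trans (size_mul_leq _ _)); rewrite hu.
    by rewrite addn2 /= ltnS.
  apply: (leq_trans s11); rewrite geq_max ltnS leq_maxr. exact: leqnSn.
- rewrite mulrC mul_polyC; apply: (leq_trans (size_scale_leq _ _)).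
  by apply: (leq_trans s10); apply: leq_trans (leqnSn k) (leq_maxr _ _).
Qed.

Lemma disc_poly p : (1 <= p)%N -> exists D : {poly R},
  [/\ size D = p.+1,
      lead_coef D = \prod_(i < p) (a (Posz (p - i)))^-1 &
      forall l, discriminant p a b l = D.[l]].
Proof.
move=> hp; set f := fun i : nat => Posz (p - i).
have tr2 : forall M : 'M[{poly R}]_2, \tr M = M ord0 ord0 + M ord_max ord_max.
  move=> M; rewrite /mxtrace !big_ord_recl big_ord0 addr0.
  by have -> : lift ord0 ord0 = ord_max :> 'I_2 by apply: val_inj.
have [s00 l00 _ _ s11] := PP_size f p.
have s11' : (size (PP f p ord_max ord_max) < size (PP f p ord0 ord0))%N.
  by rewrite s00 ltnS (leq_trans s11) // geq_max hp leqnn.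
exists (\tr (PP f p)); split.
- by rewrite tr2 size_addl.
- by rewrite tr2 lead_coefDl.
- move=> l; rewrite /discriminant -(PP_eval f p l) trace_map_mx.
  by [].
Qed.
End PolyPart.

Theorem corollary1p2 (R : realType) (p : nat) (a b : int -> R)
    (lo hi : nat -> R) :
  (2 <= p)%N ->
  (forall n, 0 < a n) ->
  (forall n, a (n + p%:Z) = a n) ->
  (forall n, b (n + p%:Z) = b n) ->
  band_edges p a b lo hi ->
  4 * geomA p a ^+ p / (hi p.-1 - lo 0%N) ^+ p.-1
    <= \big[Num.max/0]_(n < p) (hi n - lo n).
Proof.
move=> hp apos _ _ [Hspec Hlt Hle Hmono Honto].
set Del := discriminant p a b.
have hp1 : (1 <= p)%N by apply: leq_trans hp.
have [D [sD lD eD]] := @disc_poly R a b apos p hp1.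
set L := lead_coef D in lD.
have prodpos : 0 < \prod_(i < p) a (Posz i.+1) by apply: prodr_gt0 => i _.
have hL : L = (geomA p a ^+ p)^-1.
  rewrite lD prodfV; congr (_^-1).
  rewrite /geomA -powR_mulrn ?powR_ge0 // -powRrM mulVf ?pnatr_eq0 -?lt0n //.
  rewrite powRr1 ?ltW //.
  rewrite (reindex_inj rev_ord_inj) /=; apply: eq_bigr => i _.
  by rewrite subKn.
have Lpos : 0 < L by rewrite lD prodfV invr_gt0; apply: prodr_gt0 => i _.
have bnd : forall n l, (n < p)%N -> lo n <= l <= hi n -> `|Del l| <= 2.
  by move=> n l hn hl; apply/(proj2 (Hspec l)); exists n.
have edge : forall n, (n < p)%N ->
   (Del (lo n) = -2 /\ Del (hi n) = 2) \/ (Del (lo n) = 2 /\ Del (hi n) = -2).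
  move=> n hn.
  have hlo : lo n <= hi n by apply/ltW/Hlt.
  have blo := bnd n (lo n) hn; have bhi := bnd n (hi n) hn.
  rewrite lexx hlo /= in blo; rewrite lexx hlo /= in bhi.
  have := blo isT; have := bhi isT; rewrite !ler_norml => /andP[h1 h2] /andP[h3 h4].
  have [x1 hx1 ex1] := Honto n hn (-2) (ltac:(lra)).
  have [x2 hx2 ex2] := Honto n hn 2 (ltac:(lra)).
  case/andP: hx1 => hx1a hx1b; case/andP: hx2 => hx2a hx2b.
  case: (Hmono n hn) => M.
  + left; split.
      have := M _ _ (lexx _) hx1a hx1b.
      rewrite ex1 => ?; lra.
    have := M _ _ (hx2a) hx2b (lexx _); rewrite ex2 => ?; lra.
  + right; split.
      have := M _ _ (lexx _) hx2a hx2b.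
      rewrite ex2 => ?; lra.
    have := M _ _ (hx1a) hx1b (lexx _); rewrite ex1 => ?; lra.
have lomono : forall i j, (i <= j)%N -> (j < p)%N -> lo i <= lo j.
  move=> i j; elim: j => [|j IH] hij hj; first by move: hij; rewrite leqn0 => /eqP ->.
  case: (ltngtP i j.+1) hij => // [hij' _|-> _]; last exact: lexx.
  apply: le_trans (IH hij' (ltnW hj)) _.
  exact: le_trans (ltW (Hlt j (ltnW hj))) (Hle j hj).
have himono : forall i j, (i <= j)%N -> (j < p)%N -> hi i <= hi j.
  move=> i j; elim: j => [|j IH] hij hj; first by move: hij; rewrite leqn0 => /eqP ->.
  case: (ltngtP i j.+1) hij => // [hij' _|-> _]; last exact: lexx.
  apply: le_trans (IH hij' (ltnW hj)) _.
  exact: le_trans (Hle j hj) (ltW (Hlt j.+1 hj)).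
set s := hi p.-1 - lo 0%N.
have hpp : (p.-1 < p)%N by rewrite prednK.
have spos : 0 < s.
  rewrite /s subr_gt0; apply: lt_le_trans (Hlt 0%N hp1) _.
  exact: himono.
set h := hi 0%N - lo 0%N.
have key : forall c, 0 <= c < 2 -> 2 + c <= L * h * s ^+ p.-1.
  move=> c /andP[c0 c2].
  have exH : forall n, exists x, (n < p)%N -> lo n < x < hi n /\ Del x = c.
    move=> n; case: (ltnP n p) => hn; last by exists 0.
    have [x /andP[xa xb] ex] := Honto n hn c (ltac:(apply/andP; split; lra)).
    exists x => _; split => //.
    have := edge n hn; rewrite !lt_neqAle xa xb !andbT => E.
    apply/andP; split; [apply/eqP => Ex; rewrite Ex in E | apply/eqP => Ex; rewrite -Ex in E]; rewrite /Del ex in E; case: E => -[E1 E2]; move: E1 E2 c0 c2; clear; lra.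
  have [r hr] := boolp.choice exH.
  have rincr : forall i j, (i < j)%N -> (j < p)%N -> r i < r j.
    move=> i j; elim: j => [|j IH] // hij hj.
    have [lj _] := hr j (ltnW hj); have [lj1 _] := hr j.+1 hj.
    have step : r j < r j.+1.
      case/andP: lj => _ lj; case/andP: lj1 => lj1 _.
      exact: lt_trans lj (le_lt_trans (Hle j hj) lj1).
    move: hij; rewrite ltnS leq_eqVlt => /orP[/eqP -> //|hij'].
    exact: lt_trans (IH hij' (ltnW hj)) step.
  set rs := [seq r i | i <- iota 0 p].
  have urs : uniq rs.
    rewrite map_inj_in_uniq ?iota_uniq // => i j; rewrite !mem_iota !add0n => /andP[_ hi'] /andP[_ hj'] E.
    case: (ltngtP i j) => // hij.
      by have := rincr _ _ hij hj'; rewrite E ltxx.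
    by have := rincr _ _ hij hi'; rewrite E ltxx.
  set Q := D - c%:P.
  have sC : (size (- c%:P) < size D)%N.
    by rewrite size_polyN sD ltnS (leq_trans (size_polyC_leq1 _)).
  have sQ : size Q = (size rs).+1 by rewrite size_addl // sD size_map size_iota.
  have lQ : lead_coef Q = L by rewrite lead_coefDl.
  have roots : all (root Q) rs.
    apply/allP => z /mapP [i]; rewrite mem_iota add0n => /andP[_ hi'] ->.
    have [_ e] := hr i hi'.
    by rewrite /root hornerD hornerN hornerC -eD -/Del e subrr.
  have fac := all_roots_prod_XsubC sQ roots (introT idP (etrans (uniq_rootsE rs) urs)).
  rewrite lQ in fac.
  have [y [ya yb ey]] : exists y, [/\ lo 0%N <= y, y <= hi 0%N & Del y = -2].
    have hl0 : lo 0%N <= hi 0%N by apply/ltW/Hlt.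
    case: (edge 0%N hp1) => [[e1 _]|[_ e2]].
      by exists (lo 0%N); split.
    by exists (hi 0%N); split.
  have Qy : Q.[y] = -2 - c by rewrite hornerD hornerN hornerC -eD -/Del ey.
  have : `|Q.[y]| = L * \prod_(0 <= i < p) `|y - r i|.
    rewrite {1}fac hornerZ horner_prod normrM gtr0_norm // normr_prod big_map.
    by congr (_ * _); rewrite /index_iota subn0; apply: eq_bigr => i _; rewrite hornerXsubC.
  rewrite Qy ler0_norm; last by lra.
  rewrite big_ltn // => E.
  have h0 : `|y - r 0%N| <= h.
    have [/andP[r0a r0b] _] := hr 0%N hp1.
    rewrite ler_norml; apply/andP; split; rewrite /h; lra.
  have hrest : \prod_(1 <= i < p) `|y - r i| <= s ^+ p.-1.
    rewrite -subn1 -prodr_const_nat big_nat_cond [X in _ <= X]big_nat_cond.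
    apply: ler_prod => i /andP[/andP[i1 i2] _]; rewrite normr_ge0 /=.
    have [/andP[ria rib] _] := hr i i2.
    have l0i := lomono 0%N i (leq0n i) i2.
    have hip := himono i p.-1 (ltac:(by rewrite -ltnS prednK)) hpp.
    have h0p := himono 0%N p.-1 (leq0n _) hpp.
    rewrite ler_norml; apply/andP; split; rewrite /s; lra.
  have Pge0 : 0 <= \prod_(1 <= i < p) `|y - r i| by apply: prodr_ge0 => i _.
  apply: (@le_trans _ _ (L * (`|y - r 0%N| * \prod_(1 <= i < p) `|y - r i|))).
    by rewrite -E opprB addrC opprK lexx.
  rewrite -mulrA ler_pM2l //.
  by apply: ler_pM => //.
set K := L * h * s ^+ p.-1 in key.
have K4 : 4 <= K.
  case: (lerP 4 K) => // hK.
  have k0 := key 0 (ltac:(apply/andP; split; lra)).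
  have k1 := key (K / 2) (ltac:(apply/andP; split; lra)).
  move: k0 k1 hK; clear -K; lra.
rewrite /K hL in K4.
apply: le_trans (_ : _ <= h) _.
  have spp : 0 < s ^+ p.-1 by apply: exprn_gt0.
  have gpos : 0 < geomA p a ^+ p by rewrite -[X in 0 < X]invrK -hL invr_gt0.
  rewrite ler_pdivrMr //.
  move: K4 gpos; set g := geomA p a ^+ p; set S := s ^+ p.-1 => K4 gpos.
  have gg : g * g^-1 = 1 by rewrite mulfV // gt_eqF.
  move: gg K4 gpos; set gi := g^-1 => gg K4 gpos.
  nra.
exact: (le_bigmax _ (fun n : 'I_p => hi n - lo n) (Ordinal hp1)).
Qed.
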